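(* For every integer $n\ge 2$, the configuration $\mathit{DCD}(n)$ is isomorphic (as a combinatorial incidence structure) to the combinatorial configuration $N(O_n)$ obtained by the $V$-construction from the Odd graph $O_n$.
   Context: $\mathit{DCD}(n)$ (Desargues–Cayley–Danzer configuration): take $2n-1$ hyperplanes in general position (no more than $n$ of them through a common point) in $n$-dimensional projective space. Each $n$ of them meet in a point and each $n-1$ of them meet in a line; the points and lines are thus labelled by the $n$-element and the $(n-1)$-element subsets of a $(2n-1)$-element set, and a point is incident with a line iff the label of the line is contained in the label of the point. As a combinatorial incidence structure, $\mathit{DCD}(n)$ has as points the $n$-subsets and as lines the $(n-1)$-subsets of $\{1,\dots,2n-1\}$, with incidence given by containment. The Odd graph $O_n$ is the Kneser graph $K(2n-1,n-1)$: its vertices are the $(n-1)$-subsets of a $(2n-1)$-element set, two being adjacent iff they are disjoint. $V$-construction: for a regular graph $G$, let $N(v)$ denote the set of neighbours of a vertex $v$. $G$ is admissible if no two distinct vertices have the same neighbourhood. For admissible $G$, $N(G)$ is the incidence structure whose points are the vertices of $G$, whose blocks are the sets $N(v)$, $v\in V(G)$, and with incidence given by membership. Two incidence structures are isomorphic if there are bijections between their point sets and between their block sets preserving incidence. *)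

(* Defs.v *)
From mathcomp Require Import all_boot.
Set Implicit Arguments. Unset Strict Implicit. Unset Printing Implicit Defensive.

Record incidence_structure := IncStr {
  ipoint : finType;
  iblock : finType;
  incid : ipoint -> iblock -> bool }.

Definition inc_isomorphic (S1 S2 : incidence_structure) : Prop :=
  exists (f : ipoint S1 -> ipoint S2) (g : iblock S1 -> iblock S2),
    [/\ bijective f, bijective g &
        forall p b, incid p b = incid (f p) (g b)].

Definition ksubset (T : finType) (k : nat) := {A : {set T} | #|A| == k}.

Definition DCD (n : nat) : incidence_structure :=
  @IncStr (ksubset 'I_(2 * n - 1) n) (ksubset 'I_(2 * n - 1) (n - 1))
    (fun P L => val L \subset val P).

Record graph := Graph { gvertex : finType; gadj : rel gvertex }.

Definition kneser (m k : nat) : graph :=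
  @Graph (ksubset 'I_m k) (fun A B => [disjoint val A & val B]).

Definition odd_graph (n : nat) : graph := kneser (2 * n - 1) (n - 1).

Definition nbhd (G : graph) (v : gvertex G) : {set gvertex G} :=
  [set w | gadj v w].

Definition regular (G : graph) : Prop :=
  exists d, forall v : gvertex G, #|nbhd v| = d.

Definition admissible (G : graph) : Prop :=
  forall v w : gvertex G, nbhd v = nbhd w -> v = w.

Definition nblock (G : graph) :=
  {S : {set gvertex G} | S \in [set nbhd v | v : gvertex G]}.

Definition Vconstr (G : graph) : incidence_structure :=
  @IncStr (gvertex G) (nblock G) (fun p S => p \in val S).

(* Main.v *)
Require Import Defs.
From mathcomp Require Import all_boot.
From mathcomp Require Import zify.
Set Implicit Arguments. Unset Strict Implicit. Unset Printing Implicit Defensive.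

Section S.
Variable n : nat.
Let T := 'I_(2 * n - 1).

Lemma cardC_pt (P : {set T}) : #|P| == n -> #|~: P| == n - 1.
Proof. move=> /eqP h; have := cardsC P; rewrite card_ord h => e; apply/eqP; lia. Qed.

Lemma cardC_ln (P : {set T}) : #|P| == n - 1 -> #|~: P| == n.
Proof. move=> /eqP h; have := cardsC P; rewrite card_ord h => e; apply/eqP; lia. Qed.

Definition fpt (P : ksubset T n) : ksubset T (n - 1) :=
  @exist _ _ (~: val P) (cardC_pt (valP P)).
Definition fpt_inv (P : ksubset T (n - 1)) : ksubset T n :=
  @exist _ _ (~: val P) (cardC_ln (valP P)).

Lemma fpt_bij : bijective fpt.
Proof.
exists fpt_inv => P; apply: val_inj; by rewrite /= setCK.
Qed.

Lemma nbhd_val (v : ksubset T (n - 1)) :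
  val @: nbhd (G := odd_graph n) v = [set A : {set T} | A \subset ~: val v & #|A| == n - 1].
Proof.
apply/setP => A; rewrite inE; apply/imsetP/idP.
- move=> [w]; rewrite inE /= => hd ->.
  by rewrite -disjoints_subset disjoint_sym hd (valP w).
- move=> /andP [hs hc]; exists (@exist _ _ A hc) => //.
  by rewrite inE /= disjoint_sym disjoints_subset.
Qed.

Lemma card_nbhd (v : ksubset T (n - 1)) : 1 <= n ->
  #|nbhd (G := odd_graph n) v| = n.
Proof.
move=> hn.
rewrite -(card_imset _ val_inj) nbhd_val cards_draws (eqP (cardC_ln (valP v))).
rewrite bin_sub ?bin1 //; lia.
Qed.

Lemma adm : 2 <= n -> admissible (odd_graph n).
Proof.
move=> hn v w e; apply/eqP; apply/negPn/negP => hne.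
have : exists x, (x \in val w) && (x \notin val v).
  case: (boolP [exists x, (x \in val w) && (x \notin val v)]) => [/existsP //| /existsPn h].
  exfalso.
  move/negP: hne; apply; apply/eqP; apply: val_inj; apply/eqP.
  rewrite eq_sym eqEcard (eqP (valP v)) (eqP (valP w)) leqnn andbT.
  apply/subsetP => x xw; by move: (h x); rewrite xw /= => /negPn.
move=> [x /andP [xw xv]].
have hcv := eqP (cardC_ln (valP v)).
have xc : x \in ~: val v by rewrite inE.
have : 0 < #|~: val v :\ x|.
  have := cardsD1 x (~: val v); rewrite xc /= => e'; rewrite hcv in e'; lia.
move=> /card_gt0P [y]; rewrite !inE => /andP [yx yv].
have hA : #|~: val v :\ y| == n - 1.
  have yc : y \in ~: val v by rewrite inE.
  have := cardsD1 y (~: val v); rewrite yc /= => e'; rewrite hcv in e'; apply/eqP; lia.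
pose A : ksubset T (n - 1) := @exist _ (fun B : {set T} => #|B| == n - 1) _ hA.
have hAv : A \in nbhd (G := odd_graph n) v.
  rewrite inE /= disjoint_sym disjoints_subset; apply/subsetP => z.
  by rewrite !inE => /andP [].
rewrite e inE /= in hAv.
move: hAv; rewrite disjoints_subset => /subsetP /(_ x xw).
by rewrite !inE eq_sym yx xv.
Qed.

End S.

Lemma nbhd_in (G : graph) (v : gvertex G) : nbhd v \in [set nbhd w | w : gvertex G].
Proof. by apply/imsetP; exists v. Qed.

Theorem theorem3p4 (n : nat) (hn : 2 <= n) :
  [/\ regular (odd_graph n), admissible (odd_graph n) &
      inc_isomorphic (DCD n) (Vconstr (odd_graph n))].
Proof.
have ha := adm hn.
split => //.
  by exists n => v; apply: card_nbhd; lia.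
pose g (L : gvertex (odd_graph n)) : nblock (odd_graph n) :=
  @exist _ _ (nbhd (G := odd_graph n) L) (@nbhd_in (odd_graph n) L).
exists (@fpt n), g; split.
- exact: fpt_bij.
- apply: inj_card_bij.
  + by move=> a b /(congr1 val) /= /ha.
  + rewrite card_sig.
    have -> : #|[pred x | x \in [set nbhd (G := odd_graph n) v | v : gvertex (odd_graph n)]]|
             = #|[set nbhd (G := odd_graph n) v | v : gvertex (odd_graph n)]| by apply: eq_card.
    by rewrite (card_imset _ ha).
- move=> P L /=.
  by rewrite inE /= disjoints_subset setCK.
Qed.
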